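(* Let $\delta,\alpha\geq0$, $\theta\in\left[\frac\alpha2,\alpha\right]$, $\varepsilon\in(0,1)$, and $$\lambda_\pm=\frac{|\xi|^{2\theta}}{2(1+|\xi|^{2\delta})}\left(-1\pm i\sqrt{4|\xi|^{2(\alpha-2\theta)}(1+|\xi|^{2\delta})-1}\right).$$ If $|\xi|<\varepsilon$ then: (i) $|\lambda_+-\lambda_-|\approx|\xi|^\alpha$; (ii) $|\lambda_\pm|^2\lesssim|\xi|^{2\alpha}$; (iii) $|e^{\lambda_\pm t}|\lesssim e^{-\frac14|\xi|^{2\theta}t}$ for $t\geq0$.
   Context: $f\lesssim g$ means $0\leq f\leq Cg$ with $C>0$ independent of $\xi$ and $t$; $g\approx f$ means $g\lesssim f$ and $f\lesssim g$. *)

(* Defs.v *)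
From Stdlib Require Import Reals.
From Coquelicot Require Import Coquelicot.
Open Scope R_scope.

Definition Cexp (z : C) : C :=
  (exp (Re z) * cos (Im z), exp (Re z) * sin (Im z)).

(* Common prefactor |xi|^{2 theta} / (2 (1 + |xi|^{2 delta})), with r = |xi| > 0. *)
Definition lam_pref (delta theta r : R) : R :=
  Rpower r (2 * theta) / (2 * (1 + Rpower r (2 * delta))).

Definition lam_sqrt (delta alpha theta r : R) : R :=
  sqrt (4 * Rpower r (2 * (alpha - 2 * theta)) * (1 + Rpower r (2 * delta)) - 1).

Definition lam_plus (delta alpha theta r : R) : C :=
  Cmult (RtoC (lam_pref delta theta r))
        (Cplus (RtoC (-1)) (Cmult Ci (RtoC (lam_sqrt delta alpha theta r)))).

Definition lam_minus (delta alpha theta r : R) : C :=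
  Cmult (RtoC (lam_pref delta theta r))
        (Cminus (RtoC (-1)) (Cmult Ci (RtoC (lam_sqrt delta alpha theta r)))).

(* Main.v *)
Require Import Defs.
From Stdlib Require Import Reals Lra Psatz.
From Coquelicot Require Import Coquelicot.
Open Scope R_scope.
Lemma t1 d a th r : Re (lam_plus d a th r) = - lam_pref d th r /\ Im (lam_plus d a th r) = lam_pref d th r * lam_sqrt d a th r
 /\ Re (lam_minus d a th r) = - lam_pref d th r /\ Im (lam_minus d a th r) = - (lam_pref d th r * lam_sqrt d a th r)
 /\ Re (Cminus (lam_plus d a th r) (lam_minus d a th r)) = 0 /\  Im (Cminus (lam_plus d a th r) (lam_minus d a th r)) = 2 * (lam_pref d th r * lam_sqrt d a th r).
Proof. unfold lam_plus, lam_minus; set (P := lam_pref d th r); set (S := lam_sqrt d a th r).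
 unfold Cminus, Cplus, Cmult, Copp, Ci, RtoC, Re, Im; simpl; repeat split; ring. Qed.
Lemma t2 (z : C) t : Cmod (Cexp (Cmult z (RtoC t))) = exp (Re z * t).
Proof. destruct z as [x y]; unfold Cexp, Cmult, RtoC, Cmod, Re, Im; simpl.
 replace ((x*t - y*0)) with (x*t) by ring.
 set (u := x * 0 + y * t).
 replace (exp (x * t) * cos u * (exp (x * t) * cos u * 1) + exp (x * t) * sin u * (exp (x * t) * sin u * 1)) with ((exp (x*t))^2 * (Rsqr (sin u) + Rsqr (cos u))) by (unfold Rsqr; ring).
 rewrite sin2_cos2, Rmult_1_r. apply sqrt_pow2. left; apply exp_pos. Qed.
Lemma rp_anti r a b : 0 < r < 1 -> a <= b -> Rpower r b <= Rpower r a.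
Proof. intros [H0 H1] Hab. unfold Rpower.
 assert (ln r < 0). { rewrite <- ln_1. apply ln_increasing; lra. }
 destruct (Req_dec a b) as [->|Hn]; [lra|]. left; apply exp_increasing; nra. Qed.
Lemma exp_le' x y : x <= y -> exp x <= exp y.
Proof. intros H; destruct (Req_dec x y) as [->|Hn]; [lra| left; apply exp_increasing; lra]. Qed.
Lemma rp_pos r a : 0 < Rpower r a.
Proof. unfold Rpower; apply exp_pos. Qed.

Theorem lemma2p5 (delta alpha theta eps : R) :
  0 <= delta -> 0 <= alpha -> alpha / 2 <= theta <= alpha -> 0 < eps < 1 ->
  (* (i) |lambda_+ - lambda_-| ≈ |xi|^alpha *)
  (exists c Cst : R, 0 < c /\ 0 < Cst /\
     forall r : R, 0 < r < eps ->
       c * Rpower r alpha <= Cmod (Cminus (lam_plus delta alpha theta r)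
                                          (lam_minus delta alpha theta r))
       /\ Cmod (Cminus (lam_plus delta alpha theta r)
                       (lam_minus delta alpha theta r)) <= Cst * Rpower r alpha) /\
  (* (ii) |lambda_±|^2 ≲ |xi|^{2 alpha} *)
  (exists Cst : R, 0 < Cst /\
     forall r : R, 0 < r < eps ->
       (Cmod (lam_plus delta alpha theta r)) ^ 2 <= Cst * Rpower r (2 * alpha) /\
       (Cmod (lam_minus delta alpha theta r)) ^ 2 <= Cst * Rpower r (2 * alpha)) /\
  (* (iii) |e^{lambda_± t}| ≲ e^{-|xi|^{2 theta} t / 4}, t >= 0 *)
  (exists Cst : R, 0 < Cst /\
     forall r t : R, 0 < r < eps -> 0 <= t ->
       Cmod (Cexp (Cmult (lam_plus delta alpha theta r) (RtoC t)))
         <= Cst * exp (- (1/4) * Rpower r (2 * theta) * t) /\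
       Cmod (Cexp (Cmult (lam_minus delta alpha theta r) (RtoC t)))
         <= Cst * exp (- (1/4) * Rpower r (2 * theta) * t)).
Proof.
  intros Hd Ha Ht He.
  assert (KEY : forall r, 0 < r < eps ->
    let A := Rpower r alpha in let B := Rpower r (2*theta) in
    let d := Rpower r (2*delta) in let P := lam_pref delta theta r in
    let X := 4 * Rpower r (2 * (alpha - 2 * theta)) * (1 + d) - 1 in
    0 < A /\ 0 < B /\ 0 < d <= 1 /\ B <= A /\ Rpower r (2*alpha) = A*A /\
    P = B / (2*(1+d)) /\ 3 <= X /\ lam_sqrt delta alpha theta r * lam_sqrt delta alpha theta r = X /\
    0 <= lam_sqrt delta alpha theta r /\
    4 * (P*P) * X * ((1+d)*(1+d)) = 4*(A*A)*(1+d) - B*B /\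
    P*P*(1+X)*(1+d) = A*A).
  { intros r Hr A B d P X.
    assert (Hr1 : 0 < r < 1) by lra.
    set (E := Rpower r (2 * (alpha - 2 * theta))).
    assert (HA : 0 < A) by apply rp_pos.
    assert (HB : 0 < B) by apply rp_pos.
    assert (Hd0 : 0 < d) by apply rp_pos.
    assert (Hd1 : d <= 1). { unfold d. rewrite <- (Rpower_O r) by lra. apply rp_anti; lra. }
    assert (HE : 1 <= E). { unfold E. rewrite <- (Rpower_O r) by lra. apply rp_anti; lra. }
    assert (HBA : B <= A) by (apply rp_anti; lra).
    assert (H2a : Rpower r (2*alpha) = A*A).
    { unfold A; rewrite <- Rpower_plus; f_equal; ring. }
    assert (HBE : B*B*E = A*A).
    { unfold A, B, E; rewrite <- !Rpower_plus; f_equal; ring. }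
    assert (HX : 3 <= X) by (unfold X; fold E; nra).
    assert (HP : P = B / (2*(1+d))) by reflexivity.
    assert (HS : lam_sqrt delta alpha theta r * lam_sqrt delta alpha theta r = X)
      by (apply sqrt_sqrt; lra).
    repeat split; try lra.
    - unfold lam_sqrt; apply sqrt_pos.
    - rewrite HP. unfold X; fold E. rewrite <- HBE. field. lra.
    - rewrite HP. unfold X; fold E. rewrite <- HBE. field. lra. }
  split; [|split].
  - exists 1, 2. split; [lra|split;[lra|]]. intros r Hr.
    destruct (KEY r Hr) as (HA & HB & Hdd & HBA & H2a & HP & HX & HS & HS0 & Hq & Hq2).
    set (A := Rpower r alpha) in *. set (B := Rpower r (2*theta)) in *.
    set (d := Rpower r (2*delta)) in *. set (P := lam_pref delta theta r) in *.
    set (S := lam_sqrt delta alpha theta r) in *.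
    set (X := 4 * Rpower r (2 * (alpha - 2 * theta)) * (1 + d) - 1) in *.
    pose proof (Cmod2_alt (Cminus (lam_plus delta alpha theta r) (lam_minus delta alpha theta r))) as Hm.
    destruct (t1 delta alpha theta r) as (_ & _ & _ & _ & Hre & Him).
    rewrite Hre, Him in Hm. fold P S in Hm.
    pose proof (Cmod_ge_0 (Cminus (lam_plus delta alpha theta r) (lam_minus delta alpha theta r))).
    set (M := Cmod _) in *.
    assert (HM2 : M*M = 4*(P*P)*X) by (rewrite <- HS; nra).
    assert (Hlow : A*A <= M*M).
    { assert (0 < (1+d)*(1+d)) by nra. 
      assert (A*A*((1+d)*(1+d)) <= M*M*((1+d)*(1+d))) by (rewrite HM2, Hq; nra). nra. }
    assert (Hup : M*M <= 4*(A*A)).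
    { assert (0 < (1+d)*(1+d)) by nra. 
      assert (M*M*((1+d)*(1+d)) <= 4*(A*A)*((1+d)*(1+d))) by (rewrite HM2, Hq; nra). nra. }
    split; nra.
  - exists 1. split; [lra|]. intros r Hr.
    destruct (KEY r Hr) as (HA & HB & Hdd & HBA & H2a & HP & HX & HS & HS0 & Hq & Hq2).
    destruct (t1 delta alpha theta r) as (H1 & H2 & H3 & H4 & _ & _).
    rewrite !Cmod2_alt, H1, H2, H3, H4, H2a.
    set (P := lam_pref delta theta r) in *. set (S := lam_sqrt delta alpha theta r) in *.
    assert (Hq0 : 0 <= P*P*(1+S*S)) by nra.
    assert (Hqq : P*P*(1+S*S) <= Rpower r alpha * Rpower r alpha).
    { rewrite <- Hq2, HS. nra. }
    split; nra.
  - exists 1. split; [lra|]. intros r t Hr Ht0.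
    destruct (KEY r Hr) as (HA & HB & Hdd & HBA & H2a & HP & HX & HS & HS0 & Hq & Hq2).
    destruct (t1 delta alpha theta r) as (H1 & H2 & H3 & H4 & _ & _).
    rewrite !t2, H1, H3, HP, Rmult_1_l.
    set (B := Rpower r (2*theta)) in *. set (d := Rpower r (2*delta)) in *.
    assert (B/4 <= B/(2*(1+d))). { apply Rmult_le_compat_l; [lra|]. apply Rinv_le_contravar; lra. }
    split; apply exp_le'; nra.
Qed.
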